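(* In the setting described in the context, let $\sigma_w,\sigma_v$ be real scalars and let $\Pi_\tau(s)=W^{1/2}\tilde\Sigma_\tau(s)$, where $$\tilde\Sigma_\tau(s)=R^T\big(sI+L_{e,s}^\tau RWR^T\big)^{-1}\begin{bmatrix}\sigma_wD_\tau^TE^{-1/2} & -\sigma_vL_{e,s}^\tau RW^{1/2}\end{bmatrix}.$$ Then $\|\Pi_\tau\|_\infty^2=\bar\sigma(\sigma_w^2X+\sigma_v^2Y)$, where $$X=W^{1/2}R^T\big(RWR^TL_{e,s}^\tau RWR^T\big)^{-1}RW^{1/2},\qquad Y=W^{1/2}R^T\big(RWR^T\big)^{-1}RW^{1/2}.$$
   Context: Let $\mathcal G$ be an undirected, connected graph without self-loops, with node set $\{1,\dots,n\}$ ($n\ge2$) and edge set $\mathcal E$, $m=|\mathcal E|$. Give each edge an arbitrary orientation; the incidence matrix $D\in\mathbb R^{n\times m}$ has $D_{il}=1$ if node $i$ is the initial node of edge $l$, $-1$ if it is the terminal node, and $0$ otherwise. Fix a spanning tree $\mathcal G_\tau$ and order the edges so the first $n-1$ are tree edges; write $D=[D_\tau\ D_c]$ with $D_\tau\in\mathbb R^{n\times(n-1)}$. Set $T_\tau^c=(D_\tau^TD_\tau)^{-1}D_\tau^TD_c$ and $R=[I_{n-1}\ T_\tau^c]\in\mathbb R^{(n-1)\times m}$. Let $W=\mathrm{diag}(w_1,\dots,w_m)$, $w_l>0$, and $E=\mathrm{diag}(\epsilon_1,\dots,\epsilon_n)$, $\epsilon_i>0$; powers of these diagonal matrices are taken entrywise.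 Define $L_{e,s}^\tau=D_\tau^TE^{-1}D_\tau$. For a stable transfer matrix $\Phi(s)$, $\|\Phi\|_\infty=\sup_{\omega\in\mathbb R}\bar\sigma(\Phi(j\omega))$ where $\bar\sigma$ is the largest singular value. *)

(* Defs.v *)
From HB Require Import structures.
From mathcomp Require Import all_boot all_order all_algebra.
From mathcomp Require Import boolp classical_sets reals.
From mathcomp Require Import complex.
Set Implicit Arguments. Unset Strict Implicit. Unset Printing Implicit Defensive.
Import Order.TTheory GRing.Theory Num.Theory.
Local Open Scope ring_scope.
Local Open Scope classical_set_scope.
Local Open Scope complex_scope.

Definition is_incidence (R : pzRingType) (n m : nat) (D : 'M[R]_(n, m)) : Prop :=
  forall l : 'I_m, exists i j : 'I_n,
    [/\ i != j, D i l = 1, D j l = -1 &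
        forall h : 'I_n, h != i -> h != j -> D h l = 0].

Definition adj_by (R : pzRingType) (n m : nat) (D : 'M[R]_(n, m)) : rel 'I_n :=
  fun i j => [exists l : 'I_m, (D i l != 0) && (D j l != 0)].

Definition graph_connected (R : pzRingType) (n m : nat) (D : 'M[R]_(n, m)) : Prop :=
  forall i j : 'I_n, connect (adj_by D) i j.

Section Mats.
Variables (R : realType) (k c : nat).
(* nodes: 'I_k.+1 (n = k+1), tree edges: 'I_k (n-1 of them),
   remaining edges: 'I_c, m = k + c *)
Variables (Dt : 'M[R]_(k.+1, k)) (Dc : 'M[R]_(k.+1, c)).
Variables (w : 'rV[R]_(k + c)) (e : 'rV[R]_(k.+1)).

Definition Wm : 'M[R]_(k + c) := diag_mx w.
Definition Wsqrt : 'M[R]_(k + c) := diag_mx (map_mx Num.sqrt w).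
Definition Einv : 'M[R]_(k.+1) := diag_mx (map_mx GRing.inv e).
Definition Einvsqrt : 'M[R]_(k.+1) :=
  diag_mx (map_mx (fun x => (Num.sqrt x)^-1) e).

Definition Ttc : 'M[R]_(k, c) := invmx (Dt^T *m Dt) *m Dt^T *m Dc.
Definition Rm : 'M[R]_(k, k + c) := row_mx 1%:M Ttc.
Definition Les : 'M[R]_k := Dt^T *m Einv *m Dt.

Definition cmx (p q : nat) (A : 'M[R]_(p, q)) : 'M[R[i]]_(p, q) :=
  map_mx (real_complex R) A.

Variables (sw sv : R).

Definition Bmx : 'M[R]_(k, k.+1 + (k + c)) :=
  row_mx (sw *: (Dt^T *m Einvsqrt)) (- sv *: (Les *m Rm *m Wsqrt)).

Definition Pi_tau (s : R[i]) : 'M[R[i]]_(k + c, k.+1 + (k + c)) :=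
  cmx Wsqrt *m cmx Rm^T *m invmx (s%:M + cmx (Les *m Rm *m Wm *m Rm^T))
    *m cmx Bmx.

Definition Xmx : 'M[R]_(k + c) :=
  Wsqrt *m Rm^T *m invmx (Rm *m Wm *m Rm^T *m Les *m Rm *m Wm *m Rm^T)
    *m Rm *m Wsqrt.
Definition Ymx : 'M[R]_(k + c) :=
  Wsqrt *m Rm^T *m invmx (Rm *m Wm *m Rm^T) *m Rm *m Wsqrt.
End Mats.

Definition adjmx (R : rcfType) (p q : nat) (A : 'M[R[i]]_(p, q)) : 'M[R[i]]_(q, p) :=
  (map_mx (@conjc R) A)^T.

(* largest singular value: square root of the largest eigenvalue of A^* A
   (all eigenvalues of A^* A are real and nonnegative) *)
Definition sigma_max (R : realType) (p q : nat) (A : 'M[R[i]]_(p, q)) : R :=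
  Num.sqrt (sup [set x : R | eigenvalue (adjmx A *m A) x%:C]).

Definition hinf_norm (R : realType) (p q : nat) (Phi : R[i] -> 'M[R[i]]_(p, q)) : R :=
  sup (range (fun om : R => sigma_max (Phi (Complex 0 om)))).

(* Main.v *)
Require Import Defs.
From HB Require Import structures.
From mathcomp Require Import all_boot all_order all_algebra.
From mathcomp Require Import boolp classical_sets reals.
From mathcomp Require Import complex.
From mathcomp Require Import sesquilinear spectral zify.
Import Order.TTheory GRing.Theory Num.Theory.
Set Implicit Arguments. Unset Strict Implicit. Unset Printing Implicit Defensive.
Local Open Scope ring_scope.

Lemma invmxM (F : fieldType) n (A B : 'M[F]_n) : A \in unitmx -> B \in unitmx ->
  invmx (A *m B) = invmx B *m invmx A.
Proof.
move=> uA uB; have uAB : A *m B \in unitmx by rewrite unitmx_mul uA uB.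
transitivity (invmx (A *m B) *m (A *m B) *m (invmx B *m invmx A)).
  by rewrite !mulmxA mulmxK // mulmxK.
by rewrite mulVmx // mul1mx.
Qed.

Lemma unit_ker (F : fieldType) n (A : 'M[F]_n) :
  (forall u : 'rV_n, u *m A = 0 -> u = 0) -> A \in unitmx.
Proof.
move=> H; rewrite -row_free_unit -kermx_eq0; apply/eqP/row_matrixP => i.
by rewrite row0; apply: H; apply/sub_kermxP; exact: row_sub.
Qed.

Lemma diag_mul1 (F : fieldType) n (a b : 'rV[F]_n) :
  (forall j, a 0 j * b 0 j = 1) -> diag_mx a *m diag_mx b = 1%:M.
Proof.
move=> H; rewrite mul_mx_diag; apply/matrixP => i j; rewrite !mxE.
by have [->|ne] := eqVneq i j; rewrite ?mulr1n ?H // mulr0n mul0r.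
Qed.

Lemma diag_mulE (F : fieldType) n (a b : 'rV[F]_n) :
  diag_mx a *m diag_mx b = diag_mx (\row_j (a 0 j * b 0 j)).
Proof.
rewrite mul_mx_diag; apply/matrixP => i j; rewrite !mxE.
by have [->|ne] := eqVneq i j; rewrite ?mulr1n // mulr0n mul0r.
Qed.

Lemma core_gen (F : fieldType) n (L G : 'M[F]_n) a b :
  L \in unitmx -> G \in unitmx -> L^T = L -> G^T = G ->
  invmx (L *m G) *m (a *: L + b *: (L *m G *m L)) *m (invmx (L *m G))^T
  = a *: invmx (G *m L *m G) + b *: invmx G.
Proof.
move=> uL uG tL tG.
rewrite trmx_inv trmx_mul tL tG !invmxM // ?unitmx_mul ?uL ?uG //.
rewrite mulmxDr mulmxDl -!scalemxAr -!scalemxAl; congr (_ *: _ + _ *: _).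
  by rewrite !mulmxA mulmxKV.
by rewrite !mulmxA mulmxKV // mulVmx // mul1mx mulmxV // mul1mx.
Qed.


Lemma comm_gen (F : fieldType) n (L G : 'M[F]_n) a b :
  (a *: L + b *: (L *m G *m L)) *m (G *m L) = (L *m G) *m (a *: L + b *: (L *m G *m L)).
Proof.
rewrite mulmxDl mulmxDr -!scalemxAl -!scalemxAr; congr (_ *: _ + _ *: _); by rewrite !mulmxA.
Qed.

Lemma M_gen (F : fieldType) p m n (Ws W : 'M[F]_p) (Rr : 'M[F]_(n, p)) (L : 'M[F]_n)
    (B : 'M[F]_(n, m)) a b :
  Ws^T = Ws ->
  invmx (L *m (Rr *m W *m Rr^T)) *m (B *m B^T) *m (invmx (L *m (Rr *m W *m Rr^T)))^T
  = a *: invmx ((Rr *m W *m Rr^T) *m L *m (Rr *m W *m Rr^T)) + b *: invmx (Rr *m W *m Rr^T) ->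
  a *: (Ws *m Rr^T *m invmx (Rr *m W *m Rr^T *m L *m Rr *m W *m Rr^T) *m Rr *m Ws)
  + b *: (Ws *m Rr^T *m invmx (Rr *m W *m Rr^T) *m Rr *m Ws)
  = (Ws *m Rr^T *m invmx (L *m Rr *m W *m Rr^T) *m B)
     *m (Ws *m Rr^T *m invmx (L *m Rr *m W *m Rr^T) *m B)^T.
Proof.
move=> tW core.
have e1 : L *m Rr *m W *m Rr^T = L *m (Rr *m W *m Rr^T) by rewrite !mulmxA.
have e2 : Rr *m W *m Rr^T *m L *m Rr *m W *m Rr^T
        = (Rr *m W *m Rr^T) *m L *m (Rr *m W *m Rr^T) by rewrite !mulmxA.
rewrite e1 e2.
transitivity (Ws *m Rr^T *m (invmx (L *m (Rr *m W *m Rr^T)) *m (B *m B^T)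
   *m (invmx (L *m (Rr *m W *m Rr^T)))^T) *m (Rr *m Ws)).
  rewrite core mulmxDr mulmxDl -!scalemxAr -!scalemxAl; congr (_ *: _ + _ *: _);
  by rewrite !mulmxA.
by rewrite !trmx_mul trmxK tW !mulmxA.
Qed.
Local Open Scope sesquilinear_scope.

Section Cplx.
Variable C : numClosedFieldType.

Definition n2 {n} (v : 'rV[C]_n) : C := (v *m v^t*) 0 0.
Definition qf {n} (v : 'rV[C]_n) (A : 'M[C]_n) : C := (v *m A *m v^t*) 0 0.

Lemma n2E n (v : 'rV[C]_n) : n2 v = \sum_j v 0 j * (v 0 j)^*.
Proof. by rewrite /n2 mxE; apply: eq_bigr => j _; rewrite !mxE. Qed.

Lemma n2_ge0 n (v : 'rV[C]_n) : 0 <= n2 v.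
Proof. by rewrite n2E; apply: sumr_ge0 => j _; exact: mul_conjC_ge0. Qed.

Lemma n2_eq0 n (v : 'rV[C]_n) : n2 v = 0 -> v = 0.
Proof.
rewrite n2E => /eqP; rewrite psumr_eq0 => [/allP H|j _]; last exact: mul_conjC_ge0.
apply/rowP => j; rewrite mxE; have /H := mem_index_enum j.
by rewrite implyTb mul_conjC_eq0 => /eqP.
Qed.

Lemma n2_gt0 n (v : 'rV[C]_n) : v != 0 -> 0 < n2 v.
Proof.
move=> nz; rewrite lt_def n2_ge0 andbT; apply/eqP => /n2_eq0 h.
by rewrite h eqxx in nz.
Qed.

Lemma adjM m n p (A : 'M[C]_(m, n)) (B : 'M[C]_(n, p)) :
  (A *m B)^t* = B^t* *m A^t*.
Proof. by rewrite trmx_mul map_mxM. Qed.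

Lemma qf_gram n m (v : 'rV[C]_n) (F : 'M[C]_(n, m)) :
  qf v (F *m F^t*) = n2 (v *m F).
Proof. by rewrite /qf /n2 adjM !mulmxA. Qed.

Lemma qf_eig n (v : 'rV[C]_n) A x : v *m A = x *: v -> qf v A = x * n2 v.
Proof. by rewrite /qf => ->; rewrite -scalemxAl mxE. Qed.

Lemma eig_le n (A : 'M[C]_n) (m x : C) :
  (forall v, qf v A <= m * n2 v) -> eigenvalue A x -> x <= m.
Proof.
move=> H /eigenvalueP [v vA nz]; have := H v; rewrite (qf_eig vA).
by rewrite ler_pM2r // n2_gt0.
Qed.

Lemma herm_decomp n (A : 'M[C]_n) : A^t* = A ->
  exists (U : 'M[C]_n) (d : 'rV[C]_n), [/\ U \is unitarymx, U^t* *m U = 1%:M & A = U^t* *m diag_mx d *m U].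
Proof.
move=> hA; have nA : A \is normalmx by apply/normalmxP; rewrite hA.
have U1 := spectral_unitarymx A.
exists (spectralmx A), (spectral_diag A); split => //.
  by rewrite -invmx_unitary // mulVmx // unitarymx_unit.
by rewrite -invmx_unitary //; apply/orthomx_spectralP.
Qed.

Lemma diag_eig n (U : 'M[C]_n) d i : U \is unitarymx ->
  eigenvalue (U^t* *m diag_mx d *m U) (d 0 i).
Proof.
move=> /unitarymxP UU; apply/eigenvalueP; exists (delta_mx 0 i *m U).
  rewrite !mulmxA -[delta_mx 0 i *m U *m _]mulmxA UU mulmx1.
  have -> : delta_mx 0 i *m diag_mx d = d 0 i *: delta_mx (0 : 'I_1) i.
    rewrite mul_mx_diag; apply/rowP => j; rewrite !mxE eqxx /=.
    by have [->|ne] := eqVneq j i; rewrite ?mulr1 ?mulr0 ?mul0r // ?mul1r.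
  by rewrite scalemxAl.
apply/negP => /eqP h; have := congr1 (mulmx^~ (U^t*)) h.
rewrite /= -mulmxA UU mulmx1 mul0mx => /rowP/(_ i).
by rewrite !mxE !eqxx /= => /eqP; rewrite oner_eq0.
Qed.

Lemma diag_ray n (U : 'M[C]_n) (d : 'rV[C]_n) (m : C) : U^t* *m U = 1%:M ->
  (forall i, d 0 i <= m) ->
  forall v, qf v (U^t* *m diag_mx d *m U) <= m * n2 v.
Proof.
move=> UU H v; set u := v *m U^t*.
have -> : qf v (U^t* *m diag_mx d *m U) = qf u (diag_mx d).
  by rewrite /qf /u adjM trmxCK !mulmxA.
have -> : n2 v = n2 u by rewrite /n2 /u adjM trmxCK mulmxA -(mulmxA v) UU mulmx1.
rewrite /qf mul_mx_diag n2E mxE mulr_sumr; apply: ler_sum => j _; rewrite !mxE.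
by rewrite mulrAC [m * _]mulrC; apply: ler_wpM2l => //; exact: mul_conjC_ge0.
Qed.

End Cplx.

Section Cplx2.
Variable C : numClosedFieldType.

Lemma qfD n (y : 'rV[C]_n) A1 A2 : qf y (A1 + A2) = qf y A1 + qf y A2.
Proof. by rewrite /qf mulmxDr mulmxDl mxE. Qed.

Lemma qfZ n (y : 'rV[C]_n) a A : qf y (a *: A) = a * qf y A.
Proof. by rewrite /qf -scalemxAr -scalemxAl mxE. Qed.

Lemma qf_mul n m (y : 'rV[C]_n) (A : 'M[C]_(n, m)) Q : qf (y *m A) Q = qf y (A *m Q *m A^t*).
Proof. by rewrite /qf adjM !mulmxA. Qed.

Lemma adj_sA n (s : C) (N : 'M[C]_n) : (s%:M + N)^t* = (s^*)%:M + N^t*.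
Proof.
apply/matrixP => i j; rewrite !mxE rmorphD rmorphMn /=; congr (_ + _).
by rewrite eq_sym.
Qed.

Lemma MI_gen n p q (Hc : 'M[C]_(p, n)) (N1 Li : 'M[C]_n) (Bc : 'M[C]_(n, q)) (s : C) :
  s%:M + N1 \in unitmx -> Li *m N1 = 1%:M ->
  (Bc *m Bc^t*) *m N1^t* = N1 *m (Bc *m Bc^t*) -> s + s^* = 0 ->
  forall r, qf r (Hc *m invmx (s%:M + N1) *m Bc *m (Hc *m invmx (s%:M + N1) *m Bc)^t*)
          <= qf r (Hc *m Li *m Bc *m (Hc *m Li *m Bc)^t*).
Proof.
move=> uA LiN QN ss r; set A := s%:M + N1; set Q := Bc *m Bc^t*.
set Ai := invmx A.
have AN : A *m N1 = N1 *m A by rewrite /A mulmxDl mulmxDr mul_scalar_mx mul_mx_scalar.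
have AiN : Ai *m N1 = N1 *m Ai.
  by rewrite -[Ai *m N1]mulmx1 -(mulmxV uA) !mulmxA -(mulmxA Ai) -AN mulmxA mulVmx // mul1mx.
pose y := r *m Hc *m Li *m Ai.
have ha : r *m Hc *m Ai = y *m N1 by rewrite /y -(mulmxA _ Ai N1) AiN mulmxA -(mulmxA _ Li N1) LiN mulmx1.
have ha0 : r *m Hc *m Li = y *m A by rewrite /y mulmxKV.
clearbody y.
rewrite !qf_gram !mulmxA ha ha0 -!qf_gram -/Q !qf_mul adj_sA.
have -> : A *m Q *m ((s^*)%:M + N1^t*) = (s * s^*) *: Q + N1 *m Q *m N1^t*.
  rewrite /A !mulmxDl !mulmxDr !mul_mx_scalar !mul_scalar_mx -scalemxAl -mulmxA QN.
  rewrite scalerA mulrC -!addrA (addrA (s *: (N1 *m Q))) -scalerDl ss scale0r add0r.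
  by [].
rewrite qfD qfZ lerDr; apply: mulr_ge0; first exact: mul_conjC_ge0.
by rewrite /Q qf_gram n2_ge0.
Qed.

Lemma A_unit_gen n (Lc Gc : 'M[C]_n) (s : C) :
  Lc \in unitmx -> Gc \in unitmx -> Lc^t* = Lc ->
  (forall z, 0 <= qf z Gc) -> (forall z, qf z Gc = 0 -> z *m Gc = 0) ->
  (forall u, 0 <= qf u Lc) -> s + s^* = 0 -> s%:M + Lc *m Gc \in unitmx.
Proof.
move=> uL uG tL psdG defG psdL ss; apply: unit_ker => u hu.
have h1 : u *m Lc *m Gc = - s *: u.
  move: hu; rewrite mulmxDr mul_mx_scalar mulmxA addrC => /eqP.
  by rewrite addr_eq0 scaleNr => /eqP.
have hg : qf (u *m Lc) Gc = - s * qf u Lc.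
  by rewrite qf_mul tL /qf !mulmxA h1 -!scalemxAl mxE.
have g0 : 0 <= qf (u *m Lc) Gc by exact: psdG.
have t0 : 0 <= qf u Lc by exact: psdL.
have hg' : qf (u *m Lc) Gc = s * qf u Lc.
  have := congr1 Num.conj hg; rewrite conj_Creal ?ger0_real // rmorphM rmorphN /=.
  rewrite (conj_Creal (ger0_real t0)) => ->; congr (_ * _).
  by apply/eqP; rewrite eq_sym -addr_eq0 ss.
have : qf (u *m Lc) Gc + qf (u *m Lc) Gc == 0 by rewrite {1}hg hg' mulNr addNr.
rewrite paddr_eq0 // andbb => /eqP /defG h.
apply/eqP; rewrite -(mulmx_free_eq0 _ (B := Lc)) ?row_free_unit //.
by rewrite -(mulmx_free_eq0 _ (B := Gc)) ?row_free_unit // h.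
Qed.

End Cplx2.
Local Open Scope complex_scope.

Lemma diag_sq (C : numClosedFieldType) n (d : 'rV[C]_n) :
  diag_mx d *m diag_mx d = diag_mx (\row_j (d 0 j ^+ 2)).
Proof.
rewrite mul_mx_diag; apply/matrixP => i j; rewrite !mxE.
by have [->|ne] := eqVneq i j; rewrite ?mulr1n ?mulr0n ?mul0r // expr2.
Qed.

Lemma psd_max (R : realType) n (hn : (0 < n)%N) (A : 'M[R[i]]_n) : A^t* = A ->
  (forall v, 0 <= qf v A) ->
  exists lam : R, [/\ 0 <= lam, eigenvalue A lam%:C,
    (forall v, qf v A <= lam%:C * n2 v),
    eigenvalue (A^t* *m A) (lam ^+ 2)%:C &
    (forall x : R, eigenvalue (A^t* *m A) x%:C -> x <= lam ^+ 2)].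
Proof.
move=> hA psd; have [U [d [Uu UU AE]]] := herm_decomp hA.
rewrite hA; rewrite {}AE in psd *.
have dge0 : forall i, 0 <= d 0 i.
  move=> i; have /eigenvalueP [v vA nz] := diag_eig d i Uu.
  by have := psd v; rewrite (qf_eig vA) pmulr_lge0 // n2_gt0.
pose dr i := @complex.Re R (d 0 i).
have dE : forall i, d 0 i = (dr i)%:C by move=> i; rewrite /dr RRe_real // ger0_real.
pose i0 := [arg max_(i > Ordinal hn) dr i]%O.
have hmax : forall j, dr j <= dr i0.
  by rewrite /i0; case: Order.TotalTheory.arg_maxP => // i _ H j; exact: H.
have AA : U^t* *m diag_mx d *m U *m (U^t* *m diag_mx d *m U)
    = U^t* *m diag_mx (\row_j (d 0 j ^+ 2)) *m U.
  move/unitarymxP: Uu => Uu.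
  by rewrite !mulmxA -[U^t* *m _ *m U *m U^t*]mulmxA Uu mulmx1 -diag_sq !mulmxA.
have lam0 : 0 <= dr i0 by rewrite -ler0c -dE.
exists (dr i0); split => //.
- by rewrite -dE; exact: diag_eig.
- by apply: diag_ray => // i; rewrite dE lecR.
- by rewrite AA; have := diag_eig (\row_j (d 0 j ^+ 2)) i0 Uu; rewrite mxE dE rmorphXn.
move=> x; rewrite AA => hx; rewrite -(@lecR R) rmorphXn; apply: (eig_le _ hx).
apply: diag_ray => // i; rewrite mxE dE -!rmorphXn lecR.
have h0 : 0 <= dr i by rewrite -ler0c -dE.
by rewrite !expr2 ler_pM.
Qed.

Lemma rank_Dt (R : realType) k c (Dt : 'M[R]_(k.+1, k)) (Dc : 'M[R]_(k.+1, c)) :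
  is_incidence (row_mx Dt Dc) -> graph_connected Dt -> \rank Dt = k.
Proof.
move=> inc conn.
have inc' : forall l : 'I_k, exists i j, [/\ i != j, Dt i l = 1, Dt j l = -1 &
    forall h, h != i -> h != j -> Dt h l = 0].
  move=> l; have [i [j [ij h1 h2 h3]]] := inc (lshift c l).
  exists i, j; rewrite !row_mxEl in h1 h2; split => // h hi hj.
  by rewrite -(row_mxEl Dt Dc) h3.
have kerC : forall y : 'rV[R]_(k.+1), y *m Dt = 0 -> forall a b, y 0 a = y 0 b.
  move=> y hy.
  have adj : forall a b, adj_by Dt a b -> y 0 a = y 0 b.
    move=> a b /existsP [l /andP [ha hb]].
    have [i [j [ij h1 h2 h3]]] := inc' l.
    have yij : y 0 i = y 0 j.
      have := congr1 (fun M : 'rV[R]_k => M 0 l) hy; rewrite !mxE (bigD1 i) //= (bigD1 j) 1?eq_sym //=.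
      rewrite big1 ?addr0 => [|h /andP [hj hi]]; last by rewrite h3 // mulr0.
      by rewrite h1 h2 mulr1 mulrN1 => /eqP; rewrite subr_eq0 => /eqP.
    have inij : forall x, Dt x l != 0 -> y 0 x = y 0 i.
      move=> x hx; have [->//|xi] := eqVneq x i; have [->//|xj] := eqVneq x j.
      by rewrite h3 ?eqxx in hx.
    by rewrite (inij a ha) (inij b hb).
  move=> a b; have /connectP [p pth ->] := conn a b.
  elim: p a pth => [|x p IH] a //= /andP [hax hp].
  by rewrite (adj a x hax) (IH x hp).
have hK : (kermx Dt <= (const_mx 1 : 'rV[R]_(k.+1)))%MS.
  apply/row_subP => i; set y := row i (kermx Dt).
  have /sub_kermxP hy : (y <= kermx Dt)%MS by exact: row_sub.
  clearbody y.
  have -> : y = y 0 0 *: const_mx 1.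
    by apply/rowP => j; rewrite !mxE mulr1 (kerC y hy j 0).
  exact: scalemx_sub.
have := mxrankS hK; rewrite mxrank_ker.
have := rank_leq_row (const_mx 1 : 'rV[R]_(k.+1)).
have := rank_leq_col Dt.
lia.
Qed.
Section Cmx.
Variable R : realType.

Lemma conjC_rc (x : R) : (x%:C)^*%R = x%:C :> R[i].
Proof. by rewrite -[RHS](@conjc_real R). Qed.

Lemma cmx_adj p q (A : 'M[R]_(p, q)) : (cmx A)^t* = cmx A^T.
Proof. by apply/matrixP => i j; rewrite !mxE conjC_rc. Qed.

Lemma adjmxE p q (A : 'M[R[i]]_(p, q)) : adjmx A = A^t*.
Proof. by apply/matrixP => i j; rewrite !mxE; case: (A j i). Qed.

Lemma cmxM p q r (A : 'M[R]_(p, q)) (B : 'M[R]_(q, r)) : cmx (A *m B) = cmx A *m cmx B.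
Proof. exact: map_mxM. Qed.

End Cmx.

Section SupLemmas.
Variable R : realType.
Local Open Scope classical_set_scope.

Lemma sup_max (E : set R) m : E m -> (forall x, E x -> x <= m) -> sup E = m.
Proof.
move=> Em ub; apply/eqP; rewrite eq_le; apply/andP; split.
  by apply: ge_sup; [exists m | exact: ub].
by apply: ub_le_sup => //; exists m; exact: ub.
Qed.

Lemma sup_le_m (E : set R) m : (forall x, E x -> x <= m) -> 0 <= m -> sup E <= m.
Proof.
move=> ub m0; have [ne|em] := pselect (E !=set0).
  by apply: ge_sup.
rewrite (_ : E = set0) ?sup0 //; apply/seteqP; split => x // hx.
by exfalso; apply: em; exists x.
Qed.

Lemma sup_ge_x (E : set R) x m : E x -> (forall y, E y -> y <= m) -> x <= sup E.
Proof. by move=> Ex ub; apply: ub_le_sup => //; exists m. Qed.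

Lemma sup_ge0 (E : set R) m : (forall x, E x -> 0 <= x) -> (forall y, E y -> y <= m) ->
  0 <= sup E.
Proof.
move=> pos ub; have [[x Ex]|em] := pselect (E !=set0).
  by apply: le_trans (pos x Ex) (sup_ge_x Ex ub).
rewrite (_ : E = set0) ?sup0 //; apply/seteqP; split => y // hy.
by exfalso; apply: em; exists y.
Qed.

End SupLemmas.

Section Main.
Variables (R : realType) (k c : nat).
Variables (Dt : 'M[R]_(k.+1, k)) (Dc : 'M[R]_(k.+1, c)).
Variables (w : 'rV[R]_(k + c)) (e : 'rV[R]_(k.+1)) (sw sv : R).
Hypothesis hw : forall l, 0 < w 0 l.
Hypothesis he : forall i, 0 < e 0 i.
Hypothesis hrank : \rank Dt = k.

Local Notation W := (Wm w).
Local Notation Ws := (Wsqrt w).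
Local Notation Ei := (Einv e).
Local Notation Eis := (Einvsqrt e).
Local Notation Rr := (Rm Dt Dc).
Local Notation L := (Les Dt e).
Local Notation G := (Rr *m W *m Rr^T).
Local Notation B := (Bmx Dt Dc w e sw sv).

Lemma Ws_tr : Ws^T = Ws. Proof. exact: tr_diag_mx. Qed.
Lemma Ws2 : Ws *m Ws^T = W.
Proof.
rewrite Ws_tr /Wsqrt diag_mulE /Wm; congr diag_mx; apply/rowP => j.
by rewrite !mxE -expr2 sqr_sqrtr // ltW.
Qed.
Lemma Eis2 : Eis *m Eis^T = Ei.
Proof.
rewrite tr_diag_mx /Einvsqrt diag_mulE /Einv; congr diag_mx; apply/rowP => j.
by rewrite !mxE -invfM -expr2 sqr_sqrtr // ltW.
Qed.
Lemma L_tr : L^T = L.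
Proof. by rewrite /Les !trmx_mul trmxK /Einv tr_diag_mx mulmxA. Qed.
Lemma G_tr : G^T = G.
Proof. by rewrite !trmx_mul trmxK /Wm tr_diag_mx mulmxA. Qed.
Lemma L_gram : L = (Dt^T *m Eis) *m (Dt^T *m Eis)^T.
Proof. by rewrite trmx_mul trmxK mulmxA -(mulmxA _ Eis) Eis2. Qed.
Lemma G_gram : G = (Rr *m Ws) *m (Rr *m Ws)^T.
Proof. by rewrite trmx_mul mulmxA -(mulmxA _ Ws) Ws2. Qed.

Lemma BBt : B *m B^T = sw ^+ 2 *: L + sv ^+ 2 *: (L *m G *m L).
Proof.
rewrite /Bmx tr_row_mx mul_row_col !linearZ /= -!scalemxAl !scalerA.
rewrite -!expr2 sqrrN -L_gram; congr (_ + _); congr (_ *: _).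
rewrite [(L *m Rr *m Ws)^T]trmx_mul [(L *m Rr)^T]trmx_mul L_tr.
by rewrite !mulmxA -[_ *m Ws *m Ws^T]mulmxA Ws2.
Qed.


Lemma qf0 n (u : 'rV[R[i]]_n) A : u *m A = 0 -> qf u A = 0.
Proof. by rewrite /qf => ->; rewrite mul0mx mxE. Qed.

Lemma cL_unit : cmx L \in unitmx.
Proof.
apply: unit_ker => u hu.
have /n2_eq0 h : n2 (u *m cmx (Dt^T *m Eis)) = 0.
  by rewrite -qf_gram cmx_adj -cmxM -L_gram qf0.
have h2 : u *m cmx Dt^T = 0.
  have : Eis *m diag_mx (map_mx Num.sqrt e) = 1%:M.
    apply: diag_mul1 => j; rewrite !mxE mulVf //.
    by rewrite gt_eqF // sqrtr_gt0.
  move=> E1; have E1c : cmx (Eis *m diag_mx (map_mx Num.sqrt e)) = 1%:M.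
    by rewrite E1 /cmx map_mx1.
  have h' : u *m cmx Dt^T *m cmx Eis = 0 by rewrite -mulmxA -cmxM.
  by rewrite -[cmx Dt^T]mulmx1 -E1c cmxM !mulmxA h' mul0mx.
apply/eqP; rewrite -(mulmx_free_eq0 _ (B := cmx Dt^T)); first by apply/eqP.
by rewrite /row_free mxrank_map mxrank_tr hrank.
Qed.

Lemma cG_unit : cmx G \in unitmx.
Proof.
apply: unit_ker => u hu.
have /n2_eq0 h : n2 (u *m cmx (Rr *m Ws)) = 0.
  by rewrite -qf_gram cmx_adj -cmxM -G_gram qf0.
have h2 : u *m cmx Rr = 0.
  have : Ws *m diag_mx (map_mx (fun x => (Num.sqrt x)^-1) w) = 1%:M.
    apply: diag_mul1 => j; rewrite !mxE mulfV //.
    by rewrite gt_eqF // sqrtr_gt0.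
  move=> E1; have E1c : cmx (Ws *m diag_mx (map_mx (fun x => (Num.sqrt x)^-1) w)) = 1%:M.
    by rewrite E1 /cmx map_mx1.
  have h' : u *m cmx Rr *m cmx Ws = 0 by rewrite -mulmxA -cmxM.
  by rewrite -[cmx Rr]mulmx1 -E1c cmxM !mulmxA h' mul0mx.
have RK : Rr *m col_mx 1%:M 0 = 1%:M.
  by rewrite /Rm mul_row_col mulmx1 mulmx0 addr0.
have RKc : cmx (Rr *m col_mx 1%:M 0) = 1%:M by rewrite RK /cmx map_mx1.
by rewrite -[u]mulmx1 -RKc cmxM mulmxA h2 mul0mx.
Qed.

Lemma L_unit : L \in unitmx.
Proof. by rewrite -(map_unitmx (real_complex R)); exact: cL_unit. Qed.
Lemma G_unit : G \in unitmx.
Proof. by rewrite -(map_unitmx (real_complex R)); exact: cG_unit. Qed.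
Lemma LG_unit : L *m G \in unitmx.
Proof. by rewrite unitmx_mul L_unit G_unit. Qed.


Lemma core :
  invmx (L *m G) *m (B *m B^T) *m (invmx (L *m G))^T
  = sw ^+ 2 *: invmx (G *m L *m G) + sv ^+ 2 *: invmx G.
Proof. by rewrite BBt core_gen // ?L_unit ?G_unit ?L_tr ?G_tr. Qed.


Definition P0 := Ws *m Rr^T *m invmx (L *m Rr *m W *m Rr^T) *m B.
Local Notation Mr := (sw ^+ 2 *: Xmx Dt Dc w e + sv ^+ 2 *: Ymx Dt Dc w).

Lemma LGe : L *m Rr *m W *m Rr^T = L *m G.
Proof. by rewrite !mulmxA. Qed.

Lemma M_eq : Mr = P0 *m P0^T.
Proof. by rewrite /Xmx /Ymx /P0 (M_gen (B := B)) // ?Ws_tr // core. Qed.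

Lemma Pi_s s : Pi_tau Dt Dc w e sw sv s
  = cmx Ws *m cmx Rr^T *m invmx (s%:M + cmx (L *m G)) *m cmx B.
Proof. by rewrite /Pi_tau LGe. Qed.

Lemma Pi0 : Pi_tau Dt Dc w e sw sv 0 = cmx P0.
Proof.
rewrite Pi_s /P0 LGe.
have -> : (0 : R[i])%:M = 0 :> 'M_k by apply/matrixP => i j; rewrite !mxE mul0rn.
by rewrite add0r /cmx -map_invmx !map_mxM.
Qed.

Lemma psd_gram p q (F : 'M[R]_(p, q)) (z : 'rV[R[i]]_p) :
  qf z (cmx (F *m F^T)) = n2 (z *m cmx F).
Proof. by rewrite cmxM -cmx_adj qf_gram. Qed.

Lemma A_unit (s : R[i]) : s + s^*%R = 0 -> s%:M + cmx (L *m G) \in unitmx.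
Proof.
move=> ss; rewrite cmxM; apply: A_unit_gen => //.
- exact: cL_unit.
- exact: cG_unit.
- by rewrite cmx_adj L_tr.
- by move=> z; rewrite G_gram psd_gram n2_ge0.
- move=> z; rewrite G_gram psd_gram => /n2_eq0 h.
  by rewrite cmxM -cmx_adj mulmxA h mul0mx.
- by move=> z; rewrite L_gram psd_gram n2_ge0.
Qed.

Lemma MI (s : R[i]) : s + s^*%R = 0 -> forall r,
  qf r (Pi_tau Dt Dc w e sw sv s *m (Pi_tau Dt Dc w e sw sv s)^t*) <= qf r (cmx Mr).
Proof.
move=> ss r.
have LiN : cmx (invmx (L *m G)) *m cmx (L *m G) = 1%:M.
  by rewrite -cmxM mulVmx ?LG_unit // /cmx map_mx1.
have QN : cmx B *m (cmx B)^t* *m (cmx (L *m G))^t* = cmx (L *m G) *m (cmx B *m (cmx B)^t*).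
  rewrite !cmx_adj -!cmxM BBt trmx_mul L_tr G_tr.
  by rewrite comm_gen.
have := @MI_gen _ k (k + c) (k.+1 + (k + c)) (cmx Ws *m cmx Rr^T) (cmx (L *m G))
  (cmx (invmx (L *m G))) (cmx B) s (A_unit ss) LiN QN ss r.
have eP : cmx P0 = cmx Ws *m cmx Rr^T *m cmx (invmx (L *m G)) *m cmx B.
  by rewrite /P0 LGe !cmxM.
have eM : cmx Mr = cmx P0 *m (cmx P0)^t* by rewrite M_eq cmxM cmx_adj.
by rewrite eM eP Pi_s.
Qed.



Hypothesis hk : (0 < k)%N.
Local Open Scope classical_set_scope.

Lemma imag_ss (om : R) : Complex 0 om + (Complex 0 om)^*%R = 0.
Proof. by apply/eqP; rewrite eq_complex /= addr0 subrr !eqxx. Qed.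

Lemma eig_psd n m (P : 'M[R[i]]_(m, n)) (x : R) : eigenvalue (P^t* *m P) x%:C -> 0 <= x.
Proof.
move=> /eigenvalueP [v hv nz]; have := n2_ge0 (v *m P^t*).
by rewrite -qf_gram trmxCK (qf_eig hv) pmulr_lge0 ?n2_gt0 // ler0c.
Qed.

Lemma main_eq : hinf_norm (Pi_tau Dt Dc w e sw sv) ^+ 2 = sigma_max (cmx Mr).
Proof.
set Pi := Pi_tau Dt Dc w e sw sv.
have hn : (0 < k + c)%N by rewrite addn_gt0 hk.
have hMc : cmx Mr = Pi 0 *m (Pi 0)^t*.
  by rewrite /Pi Pi0 M_eq cmxM cmx_adj.
have herm : (cmx Mr)^t* = cmx Mr by rewrite hMc adjM trmxCK.
have psd : forall v, 0 <= qf v (cmx Mr) by move=> v; rewrite hMc qf_gram n2_ge0.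
have [lam [l0 leig lray l2eig l2max]] := psd_max hn herm psd.
pose Spec (om : R) := [set x : R | eigenvalue (adjmx (Pi (Complex 0 om)) *m Pi (Complex 0 om)) x%:C].
have bound : forall om x, Spec om x -> x <= lam.
  move=> om x; rewrite /Spec /= adjmxE => /eigenvalueP [v hv nz].
  have [hx|hx] := leP x 0; first exact: le_trans hx l0.
  set P := Pi (Complex 0 om) in hv.
  pose u := v *m P^t*.
  have hu : u *m (P *m P^t*) = x%:C *: u.
    by rewrite /u mulmxA -(mulmxA v) hv -scalemxAl.
  have unz : u != 0.
    apply/negP => /eqP u0; move: hv; rewrite mulmxA -/u u0 mul0mx => /esym /eqP.
    rewrite scaler_eq0 (negPf nz) orbF => /eqP x0.
    by move: hx; rewrite -(@ltcR R) x0 ltxx.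
  have := MI (imag_ss om) u; rewrite -/Pi -/P (qf_eig hu) => h1.
  have := le_trans h1 (lray u); rewrite ler_pM2r ?n2_gt0 //.
  by rewrite lecR.
have supb : forall om, sup (Spec om) <= lam by move=> om; apply: sup_le_m => //; exact: bound.
have sup0l : sup (Spec 0) = lam.
  apply/eqP; rewrite eq_le supb /=.
  have [lp|lz] := ltP 0 lam.
    apply: (sup_ge_x _ (bound 0)); rewrite /Spec /= adjmxE.
    move: leig => /eigenvalueP [u hu nz].
    have C00 : Complex 0 (0 : R) = 0 by [].
    rewrite C00; apply/eigenvalueP; exists (u *m Pi 0).
      by rewrite mulmxA -(mulmxA u) -hMc hu scalemxAl.
    apply/negP => /eqP h0; have : u *m cmx Mr = 0 by rewrite hMc mulmxA h0 mul0mx.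
    rewrite hu => /eqP; rewrite scaler_eq0 (negPf nz) orbF => /eqP.
    by move/complexI => l00; move: lp; rewrite l00 ltxx.
  have -> : lam = 0 by apply/eqP; rewrite eq_le lz l0.
  apply: (sup_ge0 _ (bound 0)) => x; rewrite /Spec /= adjmxE; exact: eig_psd.
have hinf : hinf_norm Pi = Num.sqrt lam.
  have f0 : sigma_max (Pi (Complex 0 0)) = Num.sqrt lam.
    by rewrite /sigma_max; congr Num.sqrt; exact: sup0l.
  have fb : forall om, sigma_max (Pi (Complex 0 om)) <= Num.sqrt lam.
    by move=> om; rewrite /sigma_max ler_wsqrtr //; exact: supb om.
  rewrite /hinf_norm; apply: sup_max; first by exists 0.
  by move=> y [om _ <-].
rewrite hinf sqr_sqrtr // /sigma_max adjmxE herm.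
have -> : sup [set x : R | eigenvalue (cmx Mr *m cmx Mr) x%:C] = lam ^+ 2.
  apply: sup_max; first by rewrite /= -{1}herm.
  by move=> x /=; rewrite -{1}herm; exact: l2max.
by rewrite sqrtr_sqr ger0_norm.
Qed.

End Main.

Theorem lemma6 (R : realType) (k c : nat)
  (Dt : 'M[R]_(k.+1, k)) (Dc : 'M[R]_(k.+1, c))
  (w : 'rV[R]_(k + c)) (e : 'rV[R]_(k.+1)) (sw sv : R) :
  (0 < k)%N ->
  is_incidence (row_mx Dt Dc) ->
  graph_connected (row_mx Dt Dc) ->
  graph_connected Dt ->
  (forall l, 0 < w 0 l) ->
  (forall i, 0 < e 0 i) ->
  hinf_norm (Pi_tau Dt Dc w e sw sv) ^+ 2
  = sigma_max (cmx (sw ^+ 2 *: Xmx Dt Dc w e + sv ^+ 2 *: Ymx Dt Dc w)).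
Proof.
move=> hk inc _ conn hw he.
by apply: main_eq => //; exact: rank_Dt inc conn.
Qed.
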